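(* Let $G$ be a graph with no isolated vertex and let $H$ be a nontrivial graph. Then there exists a $\gamma_{(1,0)}^s(G\circ H)$-function $f$ such that $f(V(H_u))=\sum_{y\in V(H)}f(u,y)\le 2$ for every $u\in V(G)$.
   Context: All graphs are finite and simple; $N(v)$ denotes the open neighbourhood of a vertex $v$; a graph is nontrivial if it has at least two vertices. For an integer $l\ge 1$ and $w=(w_0,\dots,w_l)$ with $w_0\ge1$ and $w_i\ge 0$ integers, a function $f:V(G)\to\{0,\dots,l\}$, with $V_i=\{v: f(v)=i\}$, is a $w$-dominating function if $f(N(v))=\sum_{u\in N(v)}f(u)\ge w_i$ for every $v\in V_i$ and every $i$. Its weight is $\omega(f)=\sum_{v\in V(G)}f(v)$. For adjacent $v,u$ with $f(v)=0$, $f(u)>0$, the function $f_{u\to v}$ is defined by $f_{u\to v}(v)=1$, $f_{u\to v}(u)=f(u)-1$, and $f_{u\to v}(x)=f(x)$ otherwise. A $w$-dominating function $f$ is secure if for every $v$ with $f(v)=0$ there is $u\in N(v)$ with $f(u)>0$ such that $f_{u\to v}$ is also $w$-dominating. $\gamma_w^s(G)$ is the minimum weight of a secure $w$-dominating function, and a $\gamma_w^s(G)$-function is a secure $w$-dominating function of weight $\gamma_w^s(G)$. The lexicographic product $G\circ H$ has vertex set $V(G)\times V(H)$, with $(u,v)(x,y)$ an edge iff $ux\in E(G)$, or $u=x$ and $vy\in E(H)$. For $u\in V(G)$, $H_u$ is the subgraph of $G\circ H$ induced by $\{u\}\times V(H)$. *)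

(* Defs.v *)
(* A simple graph = symmetric irreflexive relation on a finType. *)
From mathcomp Require Import all_boot.
Set Implicit Arguments. Unset Strict Implicit. Unset Printing Implicit Defensive.

Section Defs.
Variable V : finType.
Variable e : rel V.

Definition fN (f : V -> nat) (v : V) : nat := \sum_(u | e v u) f u.

Definition weight (f : V -> nat) : nat := \sum_(v : V) f v.

(* w-dominating function, f : V -> {0..l}, w = (w_0,...,w_l) given as a seq *)
Definition wdom (l : nat) (w : seq nat) (f : V -> nat) : Prop :=
  (forall v, f v <= l) /\ (forall v, nth 0 w (f v) <= fN f v).

Definition fmove (f : V -> nat) (u v : V) : V -> nat :=
  fun x => if x == v then 1 else if x == u then (f u).-1 else f x.

Definition secure_wdom (l : nat) (w : seq nat) (f : V -> nat) : Prop :=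
  wdom l w f /\
  (forall v, f v = 0 ->
     exists u, [/\ e v u, 0 < f u & wdom l w (fmove f u v)]).

Definition gamma_ws_function (l : nat) (w : seq nat) (f : V -> nat) : Prop :=
  secure_wdom l w f /\
  (forall g, secure_wdom l w g -> weight f <= weight g).
End Defs.

Definition lexprod (T U : finType) (g : rel T) (h : rel U) : rel (T * U) :=
  fun a b => g a.1 b.1 || ((a.1 == b.1) && h a.2 b.2).

(* Main.v *)
Require Import Defs.
From mathcomp Require Import all_boot.
From mathcomp Require Import zify.
From Stdlib Require Import Classical.

Set Implicit Arguments. Unset Strict Implicit. Unset Printing Implicit Defensive.

Section Main.
Variables (T U : finType) (g : rel T) (h : rel U).
Hypothesis g_sym : symmetric g.
Hypothesis g_irr : irreflexive g.

Notation e := (lexprod g h).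

Lemma eE x y : e x y = g x.1 y.1 || (x.1 == y.1) && h x.2 y.2.
Proof. by []. Qed.

Definition domS (A : {set T * U}) :=
  forall x, x \notin A -> exists2 y, e x y & y \in A.
Definition secS (A : {set T * U}) :=
  domS A /\ forall x, x \notin A ->
    exists y, [/\ e x y, y \in A & domS (x |: (A :\ y))].

Lemma inA' (x w y : T * U) (A : {set T * U}) :
  (y \in x |: (A :\ w)) = (y == x) || (y != w) && (y \in A).
Proof. by rewrite !inE. Qed.

Lemma neq1 (y w : T * U) : y.1 != w.1 -> y != w.
Proof. by apply: contraNneq => ->. Qed.

Lemma e_u (u : T) z n : z.1 = u -> g n.1 u -> e z n.
Proof. by move=> zu gn; rewrite eE zu g_sym gn. Qed.

Lemma neq2 (u : T) (a b : U) : a != b -> (u, b) != (u, a).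
Proof. by rewrite xpair_eqE eqxx /= eq_sym. Qed.

Lemma gneq (x y : T) : g x y -> x != y.
Proof. by apply: contraTneq => ->; rewrite g_irr. Qed.

Lemma gdom (u : T) (R A : {set T * U}) :
  domS R ->
  (exists a, (u, a) \in A) ->
  (forall z, z.1 = u -> z \notin A -> exists2 n, e z n & n \in A) ->
  (forall z, z.1 != u -> ~~ g z.1 u -> z \notin A -> z \notin R) ->
  (forall r, r \in R -> r.1 != u ->
     r \in A \/ (g r.1 u /\ exists2 r', r' \in A & r'.1 = r.1)) ->
  domS A.
Proof.
move=> dR [a ua] c2 c3 c4 x xA.
case: (eqVneq x.1 u) => [xu|xu]; first exact: c2.
case gxu: (g x.1 u).
  by exists (u, a) => //; rewrite eE gxu.
have xR := c3 x xu (negbT gxu) xA.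
have [r xr rR] := dR x xR.
have r1u : r.1 != u.
  apply/eqP => r1u; move: xr; rewrite eE r1u gxu (negbTE xu) //.
case: (c4 r rR r1u) => [rA|[gru [r' r'A r'r]]]; first by exists r.
exists r' => //. move: xr; rewrite !eE r'r.
case: (eqVneq x.1 r.1) => [xr1|xr1].
  by rewrite xr1 gru in gxu.
by rewrite !andFb !orbF.
Qed.

Lemma swap_dom (S A : {set T * U}) u a b x :
  domS S -> a != b -> (u, b) \in A ->
  (forall z, z.1 != u -> z \in S -> z \in A) ->
  (forall z, z.1 != u -> ~~ g z.1 u -> z \in A -> z \in S) ->
  (exists2 n, n \in A & g n.1 u) ->
  domS (x |: (A :\ (u, a))).
Proof.
move=> dS ab ubA P2 P3 [n nA gn].
apply: (gdom (u := u) dS).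
- by exists b; rewrite inA' ubA neq2 ?orbT.
- move=> z zu _; exists n; first exact: e_u zu gn.
  by rewrite inA' nA neq1 ?orbT //= (gneq gn).
- move=> z zu _; rewrite inA' negb_or => /andP[_]; rewrite negb_and negbK.
  case/orP => [/eqP zua|zA]; first by rewrite zua eqxx in zu.
  by apply: contra zA; exact: P2.
- move=> r rS ru; left; rewrite inA' P2 // neq1 ?orbT //.
Qed.

Lemma common (S A : {set T * U}) u a b :
  secS S -> a != b -> (u, a) \in A -> (u, b) \in A ->
  (forall z, z.1 != u -> z \in S -> z \in A) ->
  (forall z, z.1 != u -> ~~ g z.1 u -> z \in A -> z \in S) ->
  (exists2 n, n \in A & g n.1 u) ->
  (forall w, w \in S -> exists2 n, n \in A & g n.1 u && (n != w)) ->
  domS A /\ forall x, x \notin A -> x.1 != u ->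
    exists y, [/\ e x y, y \in A & domS (x |: (A :\ y))].
Proof.
move=> [dS sS] ab uaA ubA P2 P3 P4 P5; split.
  apply: (gdom (u := u) dS).
  - by exists a.
  - move=> z zu _; case: P4 => n nA gn; exists n => //; exact: e_u zu gn.
  - move=> z zu gz; apply: contra; exact: P2.
  - by move=> r rS ru; left; exact: P2.
move=> x xA xu.
case gxu: (g x.1 u).
  exists (u, a); split => //; first by rewrite eE gxu.
  exact: swap_dom dS ab ubA P2 P3 P4.
have xS : x \notin S by apply: contra xA; apply: P2.
have [w [exw wS dw]] := sS x xS.
have wu : w.1 != u.
  apply/eqP => wu; move: exw; rewrite eE wu gxu (negbTE xu) //.
have wA := P2 w wu wS.
exists w; split => //.
apply: (gdom (u := u) dw).
- exists a; rewrite inA' uaA.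
  rewrite (neq1 (y := (u, a)) (w := w)) ?orbT //=; by rewrite eq_sym.
- move=> z zu _; case: (P5 w wS) => n nA /andP[gn nw]; exists n; first exact: e_u zu gn.
  by rewrite inA' nA nw orbT.
- move=> z zu gz; rewrite inA' negb_or => /andP[zx]; rewrite negb_and negbK.
  rewrite inA' (negbTE zx) /=.
  case/orP => [/eqP ->|zA]; first by rewrite eqxx.
  by rewrite negb_and (contra (P2 z zu) zA) orbT.
- move=> r; rewrite inA' => /orP[/eqP ->|/andP[rw rS]] ru; left; rewrite inA'.
    by rewrite eqxx.
  by rewrite rw P2 // orbT.
Qed.


Definition layer (S : {set T * U}) (x : T) : {set U} := [set y | (x, y) \in S].
Definition mkA (F : T -> {set U}) : {set T * U} := [set z | z.2 \in F z.1].

Lemma in_mkA F z : (z \in mkA F) = (z.2 \in F z.1).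
Proof. by rewrite inE. Qed.
Lemma in_layer S x y : (y \in layer S x) = ((x, y) \in S).
Proof. by rewrite inE. Qed.

Definition A4 S u v a b c d := mkA (fun x => if x == u then [set a; b]
  else if x == v then layer S x :|: [set c; d] else layer S x).

Lemma alpha S u v a b c d : secS S -> g u v -> a != b -> c != d ->
  secS (A4 S u v a b c d).
Proof.
move=> sS guv ab cd; have uv := gneq guv; have gvu : g v u by rewrite g_sym.
have vu : v != u by rewrite eq_sym.
set A := A4 S u v a b c d.
have uvp (y z : U) : (u, y) != (v, z) by apply: neq1; exact: uv.
have uaA : (u, a) \in A by rewrite in_mkA /= eqxx !inE eqxx.
have ubA : (u, b) \in A by rewrite in_mkA /= eqxx !inE eqxx orbT.
have vcA : (v, c) \in A by rewrite in_mkA /= (negbTE vu) eqxx !inE eqxx orbT.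
have vdA : (v, d) \in A by rewrite in_mkA /= (negbTE vu) eqxx !inE eqxx !orbT.
have P2 : forall z, z.1 != u -> z \in S -> z \in A.
  move=> [z1 z2] /= zu zS; rewrite in_mkA /= (negbTE zu).
  by case: ifP => _; rewrite !inE zS.
have P3 : forall z, z.1 != u -> ~~ g z.1 u -> z \in A -> z \in S.
  move=> [z1 z2] /= zu gz; rewrite in_mkA /= (negbTE zu).
  have zv : z1 != v by apply: contraNneq gz => ->.
  by rewrite (negbTE zv) inE.
have P4 : exists2 n, n \in A & g n.1 u by exists (v, c).
have P5 : forall w, w \in S -> exists2 n, n \in A & g n.1 u && (n != w).
  move=> w _; case: (eqVneq w (v, c)) => [->|wvc].
    by exists (v, d) => //=; rewrite gvu neq2.
  by exists (v, c) => //=; rewrite gvu eq_sym wvc.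
have [dA sec1] := common sS ab uaA ubA P2 P3 P4 P5.
split => // x xA.
case: (eqVneq x.1 u) => [xu|xu]; last exact: sec1.
exists (v, c); split => //; first by rewrite eE xu guv.
apply: (gdom (u := u) sS.1).
- by exists a; rewrite inA' uaA uvp orbT.
- move=> z zu _; exists (v, d); first exact: (e_u (n := (v, d)) zu gvu).
  by rewrite inA' vdA neq2 // orbT.
- move=> z zu gz; rewrite inA' negb_or => /andP[_]; rewrite negb_and negbK.
  case/orP => [/eqP zvc|zA]; first by rewrite zvc /= gvu in gz.
  by apply: contra zA; exact: P2 zu.
- move=> r rS ru; case: (eqVneq r (v, c)) => [->|rvc].
    by right; split => //; exists (v, d) => //; rewrite inA' vdA neq2 // orbT.
  by left; rewrite inA' rvc P2 // orbT.
Qed.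


Definition A3 S u v a b c := mkA (fun x => if x == u then [set a; b]
  else if x == v then [set c] else layer S x).

Lemma beta S u v a b e' c : secS S -> g u v -> a != b ->
  (forall y, ((u, y) \in S) = [|| y == a, y == b | y == e']) ->
  (forall z, g u z.1 -> z \notin S) ->
  secS (A3 S u v a b c).
Proof.
move=> sS guv ab HSu HN; have uv := gneq guv; have gvu : g v u by rewrite g_sym.
have vu : v != u by rewrite eq_sym.
set A := A3 S u v a b c.
have uvp (y z : U) : (u, y) != (v, z) by apply: neq1; exact: uv.
have uaA : (u, a) \in A by rewrite in_mkA /= eqxx !inE eqxx.
have ubA : (u, b) \in A by rewrite in_mkA /= eqxx !inE eqxx orbT.
have vcA : (v, c) \in A by rewrite in_mkA /= (negbTE vu) eqxx !inE eqxx.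
have vcS : (v, c) \notin S by apply: HN.
have inAu y : ((u, y) \in A) = (y == a) || (y == b).
  by rewrite in_mkA /= eqxx !inE.
have P2 : forall z, z.1 != u -> z \in S -> z \in A.
  move=> [z1 z2] /= zu zS; rewrite in_mkA /= (negbTE zu).
  have zv : z1 != v.
    by apply: contraTneq zS => ->; apply: (HN (v, z2)).
  by rewrite (negbTE zv) inE.
have P3 : forall z, z.1 != u -> ~~ g z.1 u -> z \in A -> z \in S.
  move=> [z1 z2] /= zu gz; rewrite in_mkA /= (negbTE zu).
  have zv : z1 != v by apply: contraNneq gz => ->.
  by rewrite (negbTE zv) inE.
have P4 : exists2 n, n \in A & g n.1 u by exists (v, c).
have P5 : forall w, w \in S -> exists2 n, n \in A & g n.1 u && (n != w).
  move=> w wS; exists (v, c) => //=; rewrite gvu /=.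
  by apply: contraNneq vcS => ->.
have [dA sec1] := common sS ab uaA ubA P2 P3 P4 P5.
have Su1 r : r \in S -> g r.1 u = false.
  by move=> rS; apply/negbTE/negP => gr; move: (HN r); rewrite g_sym gr rS => /(_ isT).
have rAS r : r \in S -> r != (v, c).
  by move=> rS; apply: contraTneq rS => ->.
split => // -[x1 y] xA.
case: (eqVneq x1 u) => [xu|xu]; last exact: sec1.
subst x1.
have yab : ~~ ((y == a) || (y == b)) by rewrite -inAu.
case: (eqVneq y e') => [ye|ye].
  subst y.
  exists (v, c); split => //; first by rewrite eE /= guv.
  apply: (gdom (u := u) sS.1).
  - by exists a; rewrite inA' uaA uvp orbT.
  - move=> [z1 z2] /= zu; subst z1; rewrite inA' negb_or => /andP[zx].
    rewrite negb_and negbK => /orP[/eqP [] uv0|]; first by rewrite uv0 eqxx in uv. rewrite inAu => zab.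
    have zS : (u, z2) \notin S.
      rewrite HSu orbA negb_or zab /=; apply: contra zx => /eqP -> //.
    have [[r1 r2] zr rS] := sS.1 _ zS.
    have ur : r1 = u.
      by move: zr; rewrite eE /= g_sym (Su1 (r1, r2)) //= => /andP[/eqP ->].
    subst r1; exists (u, r2) => //; rewrite inA' inAu uvp /= xpair_eqE eqxx /=.
    by move: rS; rewrite HSu; case/or3P => ->; rewrite ?orbT.
  - move=> z zu gz; rewrite inA' negb_or => /andP[_]; rewrite negb_and negbK.
    case/orP => [/eqP zvc|zA]; first by rewrite zvc /= gvu in gz.
    by apply: contra zA; exact: P2 zu.
  - by move=> r rS ru; left; rewrite inA' rAS // P2 // orbT.
have xS : (u, y) \notin S by rewrite HSu orbA negb_or yab /=.
have [[w1 w2] [exw wS dw]] := sS.2 _ xS.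
have wu : w1 = u.
  by move: exw; rewrite eE /= g_sym (Su1 (w1, w2)) //= => /andP[/eqP ->].
subst w1.
have hyw : h y w2 by move: exw; rewrite eE /= g_irr eqxx.
have ba : b != a by rewrite eq_sym.
move: (wS); rewrite HSu => /or3P[/eqP wa|/eqP wb|/eqP we]; subst w2.
- exists (u, a); split; [by rewrite eE /= eqxx hyw orbT | by [] |].
  exact: swap_dom sS.1 ab ubA P2 P3 P4.
- exists (u, b); split; [by rewrite eE /= eqxx hyw orbT | by [] |].
  exact: swap_dom sS.1 ba uaA P2 P3 P4.
exists (v, c); split => //; first by rewrite eE /= guv.
apply: (gdom (u := u) dw).
- by exists a; rewrite inA' uaA uvp orbT.
- move=> [z1 z2] /= zu; subst z1; rewrite inA' negb_or => /andP[zx].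
  rewrite negb_and negbK => /orP[/eqP [] uv0|]; first by rewrite uv0 eqxx in uv.
  rewrite inAu => zab.
  have zR : (u, z2) \notin (u, y) |: (S :\ (u, e')).
    rewrite inA' negb_or zx /= negb_and negbK HSu orbA negb_or zab /=.
    by rewrite xpair_eqE eqxx /=; case: (z2 == e').
  have [[r1 r2] zr rR] := dw _ zR.
  move: rR; rewrite inA' => /orP[/eqP rx | /andP[rw rS]].
    by exists (r1, r2) => //; rewrite rx inA' eqxx.
  have ur : r1 = u.
    by move: zr; rewrite eE /= g_sym (Su1 (r1, r2)) //= => /andP[/eqP ->].
  subst r1; exists (u, r2) => //; rewrite inA' inAu uvp /=.
  move: rw rS; rewrite HSu xpair_eqE eqxx /= => rw.
  by case/or3P => [->|->|/eqP re]; rewrite ?orbT //; rewrite re eqxx in rw.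
- move=> z zu gz; rewrite inA' negb_or => /andP[_]; rewrite negb_and negbK.
  case/orP => [/eqP zvc|zA]; first by rewrite zvc /= gvu in gz.
  rewrite inA' negb_or negb_and negbK (contra (P2 z zu) zA) orbT andbT.
  by apply/negP => /eqP zx; rewrite zx eqxx in zu.
- move=> r; rewrite inA' => /orP[/eqP -> /= |/andP[_ rS]] ru.
    by rewrite eqxx in ru.
  by left; rewrite inA' rAS // P2 // orbT.
Qed.


Lemma layer_mkA F x : layer (mkA F) x = F x.
Proof. by apply/setP => y; rewrite !inE. Qed.

Lemma mkA_layer S : mkA (layer S) = S.
Proof. by apply/setP => -[x y]; rewrite !inE. Qed.

Lemma card_mkA F : #|mkA F| = \sum_x #|F x|.
Proof.
rewrite -sum1_card big_mkcond /=.
transitivity (\sum_x \sum_y (if (x, y) \in mkA F then 1 else 0)).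
  by rewrite pair_big; apply: eq_bigr => -[x y].
apply: eq_bigr => x _; rewrite -sum1_card [RHS]big_mkcond /=.
by apply: eq_bigr => y _; rewrite in_mkA.
Qed.

Lemma sum_two (F G : T -> nat) u v : u != v ->
  (forall x, x != u -> x != v -> F x = G x) -> F u + F v <= G u + G v ->
  \sum_x F x <= \sum_x G x.
Proof.
move=> uv H le.
have sp (K : T -> nat) :
    \sum_x K x = K u + K v + \sum_(x | (x != u) && (x != v)) K x.
  by rewrite (bigD1 u) //= (bigD1 v) 1?eq_sym //= addnA.
rewrite !sp leq_add //; rewrite leq_eqVlt; apply/orP; left; apply/eqP.
by apply: eq_bigr => x /andP[xu xv]; exact: H.
Qed.

Definition bad S := [set x | 2 < #|layer S x|].

Lemma bad_lt S F u v : u != v ->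
  (forall x, x != u -> x != v -> F x = layer S x) -> #|F u| <= 2 ->
  (2 < #|F v| -> 2 < #|layer S v|) -> 2 < #|layer S u| ->
  #|bad (mkA F)| < #|bad S|.
Proof.
move=> uv HF Fu Fv Su.
have uB : u \in bad S by rewrite inE.
rewrite (cardsD1 u (bad S)) uB add1n ltnS; apply: subset_leq_card.
apply/subsetP => x; rewrite !inE layer_mkA => bx.
case: (eqVneq x u) => [xu|xu]; first by move: bx; rewrite xu ltnNge Fu.
case: (eqVneq x v) => [xv|xv]; first by rewrite xv; apply: Fv; rewrite -xv.
by rewrite -HF.
Qed.

Lemma card_le S F u v : u != v ->
  (forall x, x != u -> x != v -> F x = layer S x) ->
  #|F u| + #|F v| <= #|layer S u| + #|layer S v| -> #|mkA F| <= #|S|.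
Proof.
move=> uv HF le; rewrite card_mkA.
have -> : #|S| = \sum_x #|layer S x| by rewrite -card_mkA mkA_layer.
by apply: (sum_two uv) => // x xu xv; rewrite HF.
Qed.


Lemma step S u : secS S -> 2 < #|layer S u| -> (exists v, g u v) -> 1 < #|U| ->
  exists A, [/\ secS A, #|A| <= #|S| & #|bad A| < #|bad S|].
Proof.
move=> sS Su [v0 guv0] U2.
set X := layer S u in Su *.
have [a aX] : exists a, a \in X by apply/card_gt0P; apply: leq_trans Su.
have [b bX'] : exists b, b \in X :\ a.
  by apply/card_gt0P; move: Su; rewrite (cardsD1 a) aX /=; lia.
have [e' eX'] : exists e', e' \in X :\ a :\ b.
  by apply/card_gt0P; move: Su; rewrite (cardsD1 a X) aX (cardsD1 b (X :\ a)) bX' /=; lia.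
have cardX : #|X| = 3 + #|X :\ a :\ b :\ e'|.
  by rewrite (cardsD1 a X) aX (cardsD1 b (X :\ a)) bX' (cardsD1 e' (X :\ a :\ b)) eX' /=; lia.
move: (bX') (eX') => /setD1P[ba bX] /setD1P[eb /setD1P[ea eX]].
have ab : a != b by rewrite eq_sym.
have [c0 [d0 cd0]] : exists c d : U, c != d.
  by case/card_gt1P: U2 => x [y [_ _ xy]]; exists x, y.
have other (c : U) : exists d : U, d != c.
  by case: (eqVneq c0 c) => [<-|]; [exists d0; rewrite eq_sym | exists c0].
have Fu (v c d : U) : True by [].
case: (pickP (fun v => g u v && (layer S v != set0))) => [v /andP[guv /set0Pn[c cV]] | none].
  have uv := gneq guv.
  have vu : v != u by rewrite eq_sym.
  have [d [dc Hd]] : exists d, d != c /\ (#|layer S v :|: [set c; d]| = #|layer S v| \/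
      (#|layer S v :|: [set c; d]| = 2 /\ 0 < #|layer S v|)).
    case: (pickP (mem (layer S v :\ c))) => [d /setD1P[dc dV] | nd].
      exists d; split => //; left.
      suff -> : layer S v :|: [set c; d] = layer S v by [].
      by apply/setUidPl/subsetP => z; rewrite in_set2 => /orP[] /eqP ->.
    have [d dc] := other c; exists d; split => //; right; split; last first.
      by apply/card_gt0P; exists c.
    suff -> : layer S v :|: [set c; d] = [set c; d] by rewrite cards2 eq_sym dc.
    apply/setP => z; rewrite in_setU in_set2; case: (eqVneq z c) => [->|zc] /=.
      by rewrite cV.
    by have := nd z; rewrite /= in_setD1 zc /= => ->.
  exists (A4 S u v a b c d); split.
  - by apply: alpha => //; rewrite eq_sym.
  - rewrite /A4; apply: (card_le uv) => [x /negbTE -> /negbTE -> //|].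
    rewrite eqxx (negbTE vu) eqxx cards2 ab /= -/X.
    case: Hd => [->|[-> Hv]]; move: Su => H; first by rewrite leq_add2r ltnW.
    exact: (leq_add H Hv).
  - rewrite /A4; apply: (bad_lt uv) => [x /negbTE -> /negbTE -> //| | |//].
      by rewrite eqxx cards2 ab.
    rewrite (negbTE vu) eqxx.
    by case: Hd => [->|[-> _]] //.
have HN : forall z, g u z.1 -> z \notin S.
  move=> [z1 z2] /= gz; apply/negP => zS; have := none z1; rewrite /= gz /=.
  move/negbFE/eqP => L; have : z2 \in layer S z1 by rewrite inE.
  by rewrite L inE.
have Lv0 : layer S v0 = set0.
  by apply/setP => z; rewrite inE [RHS]inE; apply/negbTE; apply: (HN (v0, z)).
have uv0 := gneq guv0.
have v0u : v0 != u by rewrite eq_sym.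
case: (ltnP 3 #|X|) => [X4|X3].
  exists (A4 S u v0 a b c0 d0); split.
  - exact: alpha sS guv0 ab cd0.
  - rewrite /A4; apply: (card_le uv0) => [x /negbTE -> /negbTE -> //|].
    rewrite eqxx (negbTE v0u) eqxx cards2 ab Lv0 set0U cards2 cd0 cards0.
    by rewrite /= addn0 -/X; exact: X4.
  - rewrite /A4; apply: (bad_lt uv0) => [x /negbTE -> /negbTE -> //| | |//].
      by rewrite eqxx cards2 ab.
    by rewrite (negbTE v0u) eqxx Lv0 set0U cards2 cd0.
have E : X :\ a :\ b :\ e' = set0.
  by apply/eqP; rewrite -cards_eq0; move: X3; rewrite cardX -{2}(addn0 3) leq_add2l leqn0.
have HSu y : ((u, y) \in S) = [|| y == a, y == b | y == e'].
  apply/idP/idP.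
    move=> yS; apply/negPn/negP; rewrite !negb_or => /and3P[ya yb ye].
    have : y \in X :\ a :\ b :\ e' by rewrite !in_setD1 ya yb ye in_layer.
    by rewrite E inE.
  by case/or3P => /eqP ->; rewrite -in_layer.
exists (A3 S u v0 a b a); split.
- exact: beta sS guv0 ab HSu HN.
- rewrite /A3; apply: (card_le uv0) => [x /negbTE -> /negbTE -> //|].
  rewrite eqxx (negbTE v0u) eqxx cards2 ab Lv0 cards1 cards0.
  by rewrite /= addn0 -/X; exact: Su.
- rewrite /A3; apply: (bad_lt uv0) => [x /negbTE -> /negbTE -> //| | |//].
    by rewrite eqxx cards2 ab.
  by rewrite (negbTE v0u) eqxx cards1.
Qed.


Definition ind (A : {set T * U}) : T * U -> nat := fun z => (z \in A : nat).

Lemma sum_pos (A : {set T * U}) v :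
  (0 < fN e (ind A) v) <-> exists2 w, e v w & w \in A.
Proof.
rewrite /fN lt0n sum_nat_eq0; split.
  move/forallPn => [w]; rewrite negb_imply => /andP[evw].
  by rewrite /ind; case wA: (w \in A) => //; exists w.
move=> [w evw wA]; apply/forallPn; exists w; rewrite negb_imply evw /ind wA //.
Qed.

Lemma fN_ext (f1 f2 : T * U -> nat) v : f1 =1 f2 -> fN e f1 v = fN e f2 v.
Proof. by move=> E; apply: eq_bigr => i _; rewrite E. Qed.

Lemma wdom_ext l w (f1 f2 : T * U -> nat) :
  f1 =1 f2 -> wdom e l w f1 -> wdom e l w f2.
Proof.
move=> E [H1 H2]; split => v; rewrite -E; first exact: H1.
by rewrite -(fN_ext v E).
Qed.

Lemma wdom_ind A : wdom e 1 [:: 1; 0] (ind A) <-> domS A.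
Proof.
split.
  move=> [_ H] x xA; have := H x.
  have -> : ind A x = 0 by rewrite /ind (negbTE xA).
  by move/sum_pos.
move=> dA; split; first by move=> x; rewrite /ind; case: (x \in A).
move=> x; case xA: (x \in A).
  by have -> : ind A x = 1 by rewrite /ind xA.
have -> : ind A x = 0 by rewrite /ind xA.
by apply/sum_pos; apply: dA; rewrite xA.
Qed.

Lemma fmove_ind (A : {set T * U}) (w v : T * U) : w \in A -> v \notin A ->
  fmove (ind A) w v =1 ind (v |: (A :\ w)).
Proof.
move=> wA vA x; rewrite /fmove /ind inA'.
case: (eqVneq x v) => [->|xv] //=.
case: (eqVneq x w) => [->|xw] /=; first by rewrite wA.
by [].
Qed.

Lemma sec_ind A : secure_wdom e 1 [:: 1; 0] (ind A) <-> secS A.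
Proof.
split.
  move=> [wd sc]; split; first exact/wdom_ind.
  move=> x xA.
  have x0 : ind A x = 0 by rewrite /ind (negbTE xA).
  have [w [exw wpos wd']] := sc x x0.
  have wA : w \in A by move: wpos; rewrite /ind; case: (w \in A).
  exists w; split => //; apply/wdom_ind; apply: wdom_ext wd'.
  exact: fmove_ind.
move=> [dA sA]; split; first exact/wdom_ind.
move=> x x0.
have xA : x \notin A by move: x0; rewrite /ind; case: (x \in A).
have [w [exw wA dw]] := sA x xA.
exists w; split => //; first by rewrite /ind wA.
apply: (wdom_ext (f1 := ind (x |: (A :\ w)))); last exact/wdom_ind.
by move=> z; rewrite (fmove_ind wA xA).
Qed.

Lemma secure_ext l w (f1 f2 : T * U -> nat) :
  f1 =1 f2 -> secure_wdom e l w f1 -> secure_wdom e l w f2.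
Proof.
move=> E [wd sc]; split; first exact: wdom_ext wd.
move=> v v0; have v1 : f1 v = 0 by rewrite E.
have [u [evu pu wdu]] := sc v v1.
exists u; split => //; first by rewrite -E.
by apply: wdom_ext wdu => x; rewrite /fmove !E.
Qed.

Lemma f_ind (f : T * U -> nat) :
  wdom e 1 [:: 1; 0] f -> f =1 ind [set z | f z != 0].
Proof.
by move=> [H _] z; rewrite /ind inE; case: (f z) (H z) => [|[|n]].
Qed.

Lemma weight_ind A : weight (ind A) = #|A|.
Proof.
rewrite /weight -sum1_card [RHS]big_mkcond; apply: eq_bigr => z _.
by rewrite /ind; case: (z \in A).
Qed.

Lemma weight_ext (f1 f2 : T * U -> nat) : f1 =1 f2 -> weight f1 = weight f2.
Proof. by move=> E; apply: eq_bigr => z _; rewrite E. Qed.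

Lemma reduce (noiso : forall u, exists v, g u v) (U2 : 1 < #|U|) n :
  forall S, #|bad S| <= n -> secS S ->
  exists A, [/\ secS A, #|A| <= #|S| & forall x, #|layer A x| <= 2].
Proof.
have base S : bad S = set0 -> secS S ->
    exists A, [/\ secS A, #|A| <= #|S| & forall x, #|layer A x| <= 2].
  move=> b0 sS; exists S; split => // x; rewrite leqNgt; apply/negP => Hx.
  have : x \in bad S by rewrite inE.
  by rewrite b0 inE.
elim: n => [|n IH] S bS sS.
  by apply: base => //; apply/eqP; rewrite -cards_eq0 -leqn0.
case: (eqVneq (bad S) set0) => [b0|/set0Pn[u uB]]; first exact: base.
rewrite inE in uB.
have [A [sA cA bA]] := step sS uB (noiso u) U2.
have bA' : #|bad A| <= n by rewrite -ltnS (leq_trans bA bS).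
have [B [sB cB lB]] := IH A bA' sA.
by exists B; split => //; exact: leq_trans cB cA.
Qed.

Lemma minsec : exists A0, secS A0 /\ forall B, secS B -> #|A0| <= #|B|.
Proof.
suff H : forall n (A : {set T * U}), #|A| <= n -> secS A ->
    exists A0, secS A0 /\ forall B, secS B -> #|A0| <= #|B|.
  apply: (H _ setT (leqnn _)); split => x; by rewrite inE.
elim=> [|n IH] A cA sA.
  by exists A; split => // B _; move: cA; rewrite leqn0 => /eqP ->.
case: (classic (exists B, secS B /\ #|B| <= n)) => [[B [sB cB]]|nB].
  exact: IH B cB sB.
exists A; split => // B sB; rewrite leqNgt; apply/negP => lt; apply: nB.
by exists B; split => //; rewrite -ltnS (leq_trans lt cA).
Qed.

Lemma main (noiso : forall u, exists v, g u v) (U2 : 1 < #|U|) :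
  exists f : T * U -> nat, gamma_ws_function e 1 [:: 1; 0] f /\
    (forall u : T, \sum_(y : U) f (u, y) <= 2).
Proof.
have [A0 [sA0 mA0]] := minsec.
have [A [sA cA lA]] := reduce noiso U2 (leqnn _) sA0.
exists (ind A); split; last first.
  move=> u; apply: leq_trans (lA u).
  rewrite (_ : \sum_y ind A (u, y) = #|layer A u|) //.
  rewrite -sum1_card [RHS]big_mkcond; apply: eq_bigr => y _.
  by rewrite /ind in_layer; case: ((u, y) \in A).
split; first exact/sec_ind.
move=> f sf; have E := f_ind sf.1.
have sSf : secS [set z | f z != 0] by apply/sec_ind; exact: secure_ext E sf.
rewrite weight_ind (weight_ext E) weight_ind.
exact: leq_trans cA (mA0 _ sSf).
Qed.

End Main.

Theorem lemma5 (T : finType) (g : rel T) (g_sym : symmetric g)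
  (g_irr : irreflexive g) (U : finType) (h : rel U) (h_sym : symmetric h)
  (h_irr : irreflexive h)
  (g_noiso : forall u : T, exists v : T, g u v)
  (h_nontriv : 1 < #|U|) :
  exists f : T * U -> nat,
    gamma_ws_function (lexprod g h) 1 [:: 1; 0] f /\
    (forall u : T, \sum_(y : U) f (u, y) <= 2).
Proof. exact: main g_sym g_irr g_noiso h_nontriv. Qed.
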